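(* Let $p$ be a prime and $\alpha\geqslant 2$ an integer. For $\beta\in\mathbb{N}$, $l,n\in\mathbb{N}$ and $r\in\mathbb{Z}$ put $$T_{l,\beta}^{(p)}(n,r)=\frac{l!\,p^l}{\lfloor n/p^{\beta-1}\rfloor!}\sum_{k\equiv r\ (\mathrm{mod}\ p^{\beta})}\binom nk(-1)^k\binom{(k-r)/p^{\beta}}l.$$ Then for all $l,n\in\mathbb{N}$ and $r\in\mathbb{Z}$, $$T_{l,\alpha+1}^{(p)}(n,r)\equiv(-1)^{\{r\}_p}\binom{\{n\}_p}{\{r\}_p}T_{l,\alpha}^{(p)}\Big(\Big\lfloor\frac np\Big\rfloor,\Big\lfloor\frac rp\Big\rfloor\Big)\pmod p.$$
   Context: The sum runs over all integers $k\equiv r\pmod{p^\beta}$, with $\binom nk=0$ unless $0\le k\le n$; $\binom xl=x(x-1)\cdots(x-l+1)/l!$ for any $x$. For an integer $a$ and positive integer $m$, $\{a\}_m$ is the least nonnegative residue of $a$ modulo $m$. For rationals (or elements of $\mathbb{Q}_p$) $u,v$, $u\equiv v\pmod{p^a}$ means $\operatorname{ord}_p(u-v)\ge a$. *)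

(* Defs.v *)
From mathcomp Require Import all_boot all_order all_algebra.
Set Implicit Arguments. Unset Strict Implicit. Unset Printing Implicit Defensive.
Import Order.TTheory GRing.Theory Num.Theory.
Local Open Scope ring_scope.

Definition gbinom (x : rat) (l : nat) : rat :=
  (\prod_(i < l) (x - i%:R)) / (l`!)%:R.

(* T^{(p)}_{l,beta}(n,r); the sum over k = r mod p^beta reduces to 0 <= k <= n,
   since binom n k = 0 otherwise.  floor(n / p^(beta-1)) is n %/ p^(beta-1)
   (beta >= 1 intended). *)
Definition T (p l beta n : nat) (r : int) : rat :=
  ((l`!)%:R * (p ^ l)%:R / ((n %/ p ^ (beta - 1))`!)%:R) *
  \sum_(0 <= k < n.+1 | ((p ^ beta)%:Z %| (k%:Z - r))%Z)
     ('C(n, k))%:R * (-1) ^+ k *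
     gbinom (((k%:Z - r) %/ (p ^ beta)%:Z)%Z)%:~R l.

(* u = v (mod p^a) for rationals: ord_p(u - v) >= a.  For a rational
   x = numq x / denq x in lowest terms, ord_p x >= a (a >= 1) iff p^a | numq x
   (x = 0 included since numq 0 = 0). *)
Definition ratcong (p a : nat) (u v : rat) : bool :=
  ((p ^ a)%:Z %| numq (u - v))%Z.

(* Main.v *)
Require Import Defs.
From mathcomp Require Import all_boot all_order all_algebra.
From mathcomp Require Import zify ring lra.
Import Order.TTheory GRing.Theory Num.Theory.

Definition V (p n : nat) := logn p n`!.

Lemma V_div p N : prime p -> V p N = N %/ p + V p (N %/ p).
Proof.
move=> pp; have p0 := prime_gt0 pp.
elim: N => [|N IH]; first by rewrite div0n /V fact0 logn1.
rewrite /V factS lognM ?fact_gt0 // -/(V p N) IH divnS //.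
case: (boolP (p %| N.+1)) => hd /=.
  move: (hd) => /dvdnP [c hc].
  have c0 : 0 < c by move: hc; case: c => //.
  have hc' : N.+1 %/ p = c by rewrite hc mulnK.
  have -> : N %/ p = c.-1.
    have := divnS N p0; rewrite hd hc' /=; lia.
  rewrite hc lognM // (logn_prime p pp) eqxx.
  have -> : c = c.-1.+1 by lia.
  rewrite /V factS lognM ?fact_gt0 //=; lia.
have -> : logn p N.+1 = 0.
  apply/eqP; rewrite -leqn0 leqNgt logn_gt0 mem_primes pp /=; exact: hd.
by [].
Qed.

Lemma V_small p N : prime p -> N < p -> V p N = 0.
Proof. by move=> pp hN; rewrite V_div // divn_small // /V fact0 logn1. Qed.

Lemma V_lt p i : prime p -> 0 < i -> V p i < i.
Proof.
move=> pp; have p1 := prime_gt1 pp.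
elim/ltn_ind: i => i IH i0.
rewrite V_div //.
case: (posnP (i %/ p)) => h.
  by rewrite h /V fact0 logn1.
have hlt : i %/ p < i by rewrite ltn_Pdiv.
have := IH _ hlt h.
have : 2 * (i %/ p) <= i.
  apply: leq_trans (leq_trunc_div i p); rewrite mulnC leq_mul2l p1 orbT //.
lia.
Qed.

Lemma V_mono_div p c x y : prime p -> y <= x ->
  V p (x %/ p ^ c) + V p y <= V p x + V p (y %/ p ^ c).
Proof.
move=> pp; elim: c x y => [|c IH] x y hyx.
  by rewrite expn0 !divn1 addnC.
rewrite expnS !divnMA.
have := IH (x %/ p) (y %/ p) (leq_div2r p hyx).
rewrite (V_div p x pp) (V_div p y pp).
have := leq_div2r p hyx.
lia.
Qed.

Lemma V_binom p M i : i <= M -> V p M = logn p 'C(M, i) + V p i + V p (M - i).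
Proof.
move=> hi; rewrite /V -(bin_fact hi) !lognM ?fact_gt0 ?bin_gt0 ?muln_gt0 ?fact_gt0 //.
by rewrite addnA.
Qed.

Lemma V_key p c M i : prime p -> 0 < i <= M ->
  V p (M %/ p ^ c) + 1 <= logn p 'C(M, i) + i + V p ((M - i) %/ p ^ c).
Proof.
move=> pp /andP [i0 hiM].
have h1 := V_mono_div p c M (M - i) pp (leq_subr i M).
have h2 := V_binom p M i hiM.
have h3 := V_lt p i pp i0.
lia.
Qed.

Local Open Scope ring_scope.
Implicit Types (P Q : {poly int}) (f g : int -> int) (t u c : int) (n : nat).

Definition act (P : {poly int}) (f : int -> int) (t : int) : int :=
  \sum_(i < size P) P`_i * f (t - i%:Z).

Lemma act_widen n P f t : (size P <= n)%N ->
  act P f t = \sum_(i < n) P`_i * f (t - i%:Z).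
Proof.
move=> hn; rewrite /act (big_ord_widen n (fun i => P`_i * f (t - i%:Z))) //.
rewrite big_mkcond /=; apply: eq_bigr => i _; case: ifP => // /negbT.
by rewrite -leqNgt => hi; rewrite nth_default // mul0r.
Qed.

Lemma act_ext P f g t : (forall u, f u = g u) -> act P f t = act P g t.
Proof. by move=> h; apply: eq_bigr => i _; rewrite h. Qed.

Lemma act_add P Q f t : act (P + Q) f t = act P f t + act Q f t.
Proof.
set n := maxn (size P) (size Q).
rewrite (act_widen n) ?(leq_trans (size_polyD _ _)) //.
rewrite (act_widen n P) ?leq_maxl // (act_widen n Q) ?leq_maxr //.
by rewrite -big_split /=; apply: eq_bigr => i _; rewrite coefD mulrDl.
Qed.

Lemma act_opp P f t : act (- P) f t = - act P f t.
Proof.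
rewrite /act size_polyN -sumrN; apply: eq_bigr => i _.
by rewrite coefN mulNr.
Qed.

Lemma act_scale c P f t : act (c%:P * P) f t = c * act P f t.
Proof.
rewrite (act_widen (size P)) ?(leq_trans (size_polyMleq _ _)) //.
  rewrite /act mulr_sumr; apply: eq_bigr => i _; by rewrite coefCM mulrA.
rewrite size_polyC; case: (c != 0) => //=; lia.
Qed.

Lemma act_C c f t : act c%:P f t = c * f t.
Proof.
rewrite (act_widen 1) ?size_polyC ?leq_b1 // big_ord1 coefC /=.
by rewrite subr0.
Qed.

Lemma act_0 f t : act 0 f t = 0.
Proof. by rewrite /act size_poly0 big_ord0. Qed.

Lemma act_1 f t : act 1 f t = f t.
Proof. by rewrite -[1]/(1%:P) act_C mul1r. Qed.

Lemma act_X P f t : act (P * 'X) f t = act P f (t - 1).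
Proof.
rewrite (act_widen (size P).+1); last first.
  by rewrite (leq_trans (size_polyMleq _ _)) // size_polyX addn2.
rewrite big_ord_recl coefMX /= mul0r add0r /act; apply: eq_bigr => i _.
by rewrite coefMX /= /bump /= add1n; congr (_ * f _); rewrite -addn1 PoszD; ring.
Qed.

Lemma act_lin P f g t : act P (fun u => f u + g u) t = act P f t + act P g t.
Proof. by rewrite /act -big_split; apply: eq_bigr => i _; rewrite mulrDr. Qed.

Lemma act_linN P f t : act P (fun u => - f u) t = - act P f t.
Proof. by rewrite /act -sumrN; apply: eq_bigr => i _; rewrite mulrN. Qed.

Lemma act_linM c P f t : act P (fun u => c * f u) t = c * act P f t.
Proof. by rewrite /act mulr_sumr; apply: eq_bigr => i _; rewrite mulrCA. Qed.

Lemma act_shift P f t : act P (fun u => f (u - 1)) t = act P f (t - 1).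
Proof. by apply: eq_bigr => i _; congr (_ * f _); ring. Qed.

Lemma act_mul P Q f t : act (P * Q) f t = act P (act Q f) t.
Proof.
elim/poly_ind: P Q f t => [|P c IH] Q f t.
  by rewrite mul0r !act_0.
rewrite mulrDl act_add -mulrA [('X * Q)]mulrC IH act_scale act_add act_C.
rewrite act_X; congr (_ + _).
rewrite -act_shift; apply: act_ext => u; by rewrite act_X.
Qed.

Lemma gbinom0 (x : rat) : gbinom x 0 = 1.
Proof. by rewrite /gbinom big_ord0 fact0 divr1. Qed.

Lemma gbinom0S l : gbinom 0 l.+1 = 0.
Proof. by rewrite /gbinom big_ord_recl /= subrr mul0r mul0r. Qed.

Lemma gbinomS (x : rat) l : gbinom (x + 1) l.+1 = gbinom x l.+1 + gbinom x l.
Proof.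
rewrite /gbinom big_ord_recl big_ord_recr /=.
have -> : \prod_(i < l) (x + 1 - (bump 0 i)%:R) = \prod_(i < l) (x - i%:R).
  by apply: eq_bigr => i _; rewrite /bump /= add1n -addn1 natrD; ring.
set Pr := \prod_(i < l) (x - i%:R).
rewrite factS natrM.
have h1 : (l`!)%:R != 0 :> rat by rewrite pnatr_eq0 -lt0n fact_gt0.
have h2 : (l.+1)%:R != 0 :> rat by rewrite pnatr_eq0.
rewrite subr0 -[l.+1]addn1 natrD. field.
by rewrite h1 -addn1 natrD in h2 *; rewrite h2.
Qed.

Lemma gbinom_int (x : int) l : exists z : int, gbinom x%:~R l = z%:~R.
Proof.
elim: l x => [|l IH] x; first by exists 1; rewrite gbinom0.
have up : forall y : int, (exists z : int, gbinom y%:~R l.+1 = z%:~R) ->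
    exists z : int, gbinom (y + 1)%:~R l.+1 = z%:~R.
  move=> y [z hz]; have [w hw] := IH y; exists (z + w).
  by rewrite intrD gbinomS hz hw intrD.
have down : forall y : int, (exists z : int, gbinom (y + 1)%:~R l.+1 = z%:~R) ->
    exists z : int, gbinom y%:~R l.+1 = z%:~R.
  move=> y [z hz]; have [w hw] := IH y; exists (z - w).
  move: hz; rewrite intrD gbinomS hw => hz.
  by rewrite intrB -hz addrK.
case: x => n.
  elim: n => [|n IHn]; first by exists 0; rewrite gbinom0S.
  by rewrite -addn1 PoszD; apply: up.
elim: n => [|n IHn].
  apply: down; exists 0; by rewrite /= gbinom0S.
apply: down; have -> : (Negz n.+1 + 1) = Negz n by rewrite !NegzE; lia.
exact: IHn.
Qed.

Definition binz (x : int) (l : nat) : int := numq (gbinom x%:~R l).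

Lemma binzE x l : (binz x l)%:~R = gbinom x%:~R l.
Proof. by have [z hz] := gbinom_int x l; rewrite /binz hz numq_int. Qed.

Lemma binzS x l : binz (x + 1) l.+1 = binz x l.+1 + binz x l.
Proof.
apply: (@intr_inj rat); by rewrite intrD !binzE intrD gbinomS.
Qed.

Lemma binz0 x : binz x 0 = 1.
Proof. apply: (@intr_inj rat); by rewrite binzE gbinom0. Qed.

Lemma act_Xn P n f t : act (P * 'X^n) f t = act P f (t - n%:Z).
Proof.
elim: n t => [|n IH] t; first by rewrite expr0 mulr1 subr0.
by rewrite exprSr mulrA act_X IH -addn1 PoszD; congr act; ring.
Qed.

Lemma act_1X f u : act (1 - 'X) f u = f u - f (u - 1).
Proof. by rewrite act_add act_opp -['X]mul1r act_X !act_1. Qed.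

Lemma act_1Xp n f u : act (1 - 'X^n) f u = f u - f (u - n%:Z).
Proof. by rewrite act_add act_opp -['X^n]mul1r act_Xn !act_1. Qed.

Lemma coef_1Xn n i : ((1 - 'X)^+n : {poly int})`_i = (-1)^+i * ('C(n, i))%:R.
Proof.
elim: n i => [|n IH] i.
  rewrite expr0 coef1 bin0n; case: i => [|i] //=; by rewrite mulr0.
rewrite exprSr mulrBr mulr1 coefB coefMX IH; case: i => [|i] /=.
  by rewrite !bin0 subr0.
by rewrite IH binS natrD exprS; ring.
Qed.

Lemma size_1Xn n : (size ((1 - 'X)^+n : {poly int}) <= n.+1)%N.
Proof.
apply/leq_sizeP => j hj; rewrite coef_1Xn bin_small ?mulr0 //.
Qed.

Lemma act_1XnE n f t :
  act ((1 - 'X)^+n) f t = \sum_(i < n.+1) (-1)^+i * ('C(n, i))%:R * f (t - i%:Z).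
Proof.
rewrite (act_widen n.+1) ?size_1Xn //; apply: eq_bigr => i _.
by rewrite coef_1Xn.
Qed.

Definition dil (p : nat) f u : int := if (p%:Z %| u)%Z then f (u %/ p%:Z)%Z else 0.
Definition hh (l : nat) (u : int) : int := binz (- u) l.
Definition gg (p b l : nat) : int -> int := iter b (dil p) (hh l).

Lemma dil_mul p f k : (0 < p)%N -> dil p f (k * p%:Z) = f k.
Proof.
move=> hp; rewrite /dil dvdz_mull ?dvdzz // mulzK //.
by rewrite eqz_nat -lt0n.
Qed.

Lemma dil_ndvd p f u : ~~ (p%:Z %| u)%Z -> dil p f u = 0.
Proof. by move=> h; rewrite /dil (negbTE h). Qed.

Lemma act_1X_hS l u : act (1 - 'X) (hh l.+1) u = - hh l u.
Proof.
rewrite act_1X /hh.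
have -> : - (u - 1) = - u + 1 by ring.
rewrite binzS; ring.
Qed.

Lemma act_1X_h0 u : act (1 - 'X) (hh 0) u = 0.
Proof. by rewrite act_1X /hh !binz0 subrr. Qed.

Lemma act_1Xn_h j l u :
  act ((1 - 'X)^+j) (hh l) u = if (j <= l)%N then (-1)^+j * hh (l - j) u else 0.
Proof.
elim: j u => [|j IH] u; first by rewrite expr0 act_1 subn0 mul1r.
rewrite exprS act_mul (act_ext _ _ _ _ IH).
case: (leqP j l) => hjl.
  rewrite act_linM.
  case: (leqP j.+1 l) => hjl2.
    have -> : (l - j)%N = (l - j.+1).+1 by lia.
    by rewrite act_1X_hS exprS; ring.
  have -> : (l - j)%N = 0%N by lia.
  by rewrite act_1X_h0 mulr0.
rewrite ifF; last by lia.
by rewrite (act_ext _ _ (fun _ => 0) _ (fun v => erefl)) -[X in act _ (fun _ => X)](mul0r 0) 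
   act_linM mul0r.
Qed.

Lemma act_1Xp_dil p f j u : (0 < p)%N ->
  act ((1 - 'X^p)^+j) (dil p f) u = dil p (act ((1 - 'X)^+j) f) u.
Proof.
move=> hp; elim: j u => [|j IH] u.
  by rewrite !expr0 !act_1 /dil; case: ifP => // _; rewrite act_1.
rewrite exprS act_mul (act_ext _ _ _ _ IH) act_1Xp.
have [/dvdzP [k ->] | hn] := boolP (p%:Z %| u)%Z.
  have -> : k * p%:Z - p%:Z = (k - 1) * p%:Z by ring.
  by rewrite !dil_mul // exprS act_mul act_1X.
have hn2 : ~~ (p%:Z %| u - p%:Z)%Z.
  apply: contra hn => h.
  by rewrite -[u](subrK p%:Z) rpredD // dvdzz.
by rewrite /dil (negbTE hn) (negbTE hn2) subrr.
Qed.

Lemma Q_coef_dvd p i : prime p ->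
  (p%:Z %| ((1 - 'X)^+p - (1 - 'X^p) : {poly int})`_i)%Z.
Proof.
move=> pp; have p0 := prime_gt0 pp.
rewrite coefB coefB coef1 coefXn coef_1Xn.
case: i => [|i].
  have -> : (0%N == p) = false by apply/eqP; lia.
  by rewrite expr0 mul1r subr0 bin0 subrr dvdz0.
have -> : (i.+1 == 0%N) = false by [].
rewrite sub0r opprK.
case: (ltngtP i.+1 p) => hi.
  rewrite addr0 dvdz_mull // dvdzE absz_nat /=.
  by rewrite natz absz_nat; apply: prime_dvd_bin; lia.
- by rewrite /= bin_small // mulr0 addr0 dvdz0.
- rewrite hi binn mulr1.
  have [->|odp] := even_prime pp; first by rewrite expr2 /= dvdzz.
  by rewrite -signr_odd odp expr1 addNr dvdz0.
Qed.

Lemma E_exists p : prime p -> exists W : {poly int},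
  (1 - 'X)^+p = (1 - 'X^p) + p%:R * ((1 - 'X) * W).
Proof.
move=> pp; have p0 := prime_gt0 pp.
set Q : {poly int} := (1 - 'X)^+p - (1 - 'X^p).
pose E : {poly int} := \poly_(i < p.+1) (Q`_i %/ p%:Z)%Z.
have hQ : Q = p%:R * E.
  apply/polyP => i; rewrite -polyC_natr coefCM coef_poly.
  case: ltnP => hi.
    by rewrite mulrC natz divzK //; apply: Q_coef_dvd.
  rewrite mulr0 nth_default //.
  apply: (leq_trans (size_polyD _ _)); rewrite geq_max; apply/andP; split.
    by apply: leq_trans (size_1Xn p) hi.
  rewrite size_polyN (leq_trans (size_polyD _ _)) // geq_max size_polyC.
  rewrite (leq_trans (leq_b1 _)) /= ?(leq_trans _ hi) // size_polyN size_polyXn //.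
have hE1 : root E 1.
  have : (p%:R * E).[1] = 0.
    rewrite -hQ /Q !hornerE subrr expr1n subrr expr0n /=.
    by rewrite eqn0Ngt p0 subrr.
  rewrite -polyC_natr hornerE => /eqP.
  by rewrite mulf_eq0 pnatr_eq0 eqn0Ngt p0.
have [W' hW'] := factor_theorem E 1 hE1.
exists (- W').
have h : (1 - 'X)^+p - (1 - 'X^p) = p%:R * (W' * ('X - 1)) :> {poly int}.
  by rewrite -polyC1 -hW' -hQ.
rewrite -[LHS](subrK (1 - 'X^p)) h; ring.
Qed.

Lemma act_sum (I : Type) (r : seq I) (F : I -> {poly int}) f t :
  act (\sum_(i <- r) F i) f t = \sum_(i <- r) act (F i) f t.
Proof.
elim: r => [|a r IH]; first by rewrite !big_nil act_0.
by rewrite !big_cons act_add IH.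
Qed.

Lemma decomp p (W : {poly int}) M n0 f t : (0 < p)%N ->
  (1 - 'X)^+p = (1 - 'X^p) + p%:R * ((1 - 'X) * W) ->
  act ((1 - 'X)^+(p * M + n0)) (dil p f) t =
  \sum_(i < M.+1) ('C(M, i) * p ^ i)%:R *
     act ((1 - 'X)^+n0 * ((1 - 'X) * W)^+i) (dil p (act ((1 - 'X)^+(M - i)) f)) t.
Proof.
move=> p0 hW.
rewrite exprD exprM hW exprDn mulr_suml act_sum.
apply: eq_bigr => i _.
have -> : ((1 - 'X^p) ^+ (M - i) * (p%:R * ((1 - 'X) * W)) ^+ i *+ 'C(M, i)) * (1 - 'X) ^+ n0
  = ('C(M, i) * p ^ i)%:R%:P * (((1 - 'X) ^+ n0 * ((1 - 'X) * W) ^+ i) * (1 - 'X^p) ^+ (M - i)).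
  rewrite polyC_natr natrM natrX -mulr_natl exprMn; ring.
rewrite act_scale act_mul; congr (_ * _).
by apply: act_ext => u; rewrite act_1Xp_dil.
Qed.

Lemma pdvd_mul (p a b : nat) x y : ((p ^ a)%:Z %| x)%Z -> ((p ^ b)%:Z %| y)%Z ->
  ((p ^ (a + b)%N)%:Z %| x * y)%Z.
Proof. by move=> ha hb; rewrite expnD PoszM dvdz_mul. Qed.

Lemma pdvd_le (p a b : nat) x : (a <= b)%N -> ((p ^ b)%:Z %| x)%Z -> ((p ^ a)%:Z %| x)%Z.
Proof.
move=> hab; apply: dvdz_trans; by rewrite dvdzE !absz_nat dvdn_exp2l.
Qed.

Lemma pdvd_act (d : int) P f t : (forall u, (d %| f u)%Z) -> (d %| act P f t)%Z.
Proof. by move=> h; apply: rpred_sum => i _; rewrite dvdz_mull. Qed.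

Lemma pdvd_logn (p n : nat) : ((p ^ logn p n)%:Z %| n%:Z)%Z.
Proof. by rewrite dvdzE !absz_nat pfactor_dvdnn. Qed.

Lemma dil_bound (p : nat) (d K : int) F P t : (forall u, (d %| K * F u)%Z) ->
  (d %| K * act P (dil p F) t)%Z.
Proof.
move=> h; rewrite -act_linM; apply: pdvd_act => u.
by rewrite /dil; case: ifP => _; rewrite ?mulr0 ?dvdz0.
Qed.

Lemma step (p : nat) (W : {poly int}) (cc : nat) (K : int) f : prime p ->
  (1 - 'X)^+p = (1 - 'X^p) + p%:R * ((1 - 'X) * W) ->
  (forall N u, ((p ^ (V p (N %/ p ^ cc)%N))%:Z %| K * act ((1 - 'X)^+N) f u)%Z) ->
  forall M n0 t,
  ((p ^ (V p (M %/ p ^ cc)%N))%:Z %| K * act ((1 - 'X)^+n0) (dil p (act ((1 - 'X)^+M) f)) t)%Z /\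
  ((p ^ (V p (M %/ p ^ cc)%N + 1)%N)%:Z %| K * (act ((1 - 'X)^+(p * M + n0)) (dil p f) t
      - act ((1 - 'X)^+n0) (dil p (act ((1 - 'X)^+M) f)) t))%Z.
Proof.
move=> pp hW hf M n0 t; have p0 := prime_gt0 pp.
split; first by apply: dil_bound => u; apply: hf.
rewrite (decomp _ _ _ _ _ _ p0 hW) big_ord_recl /= bin0 expn0 expr0 mulr1 subn0 mul1r.
rewrite addrC addKr mulr_sumr; apply: rpred_sum => i _.
rewrite mulrCA.
match goal with |- is_true (?x \in _) => suff H : ((p ^ (V p (M %/ p ^ cc)%N + 1)%N)%:Z %| x)%Z by exact: H end.
have hk := @V_key p cc M (bump 0 i) pp.
apply: (pdvd_le _ _ _ _ (hk _)); first by rewrite /bump /= add1n ltn_ord.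
rewrite natrM -addnA -mulrA; apply: pdvd_mul.
  by rewrite natz pdvd_logn.
apply: pdvd_mul.
  by rewrite natz dvdzz.
by apply: dil_bound => u; apply: hf.
Qed.

Definition KK (p l : nat) : int := (l`! * p ^ l)%:R.

Lemma act_zero P f t : (forall u, f u = 0) -> act P f t = 0.
Proof.
move=> h; rewrite (act_ext _ _ (fun u => 0 * 0) _ (fun u => etrans (h u) (esym (mul0r 0)))).
by rewrite act_linM mul0r.
Qed.

Lemma base p (W : {poly int}) : prime p ->
  (1 - 'X)^+p = (1 - 'X^p) + p%:R * ((1 - 'X) * W) ->
  forall N l t, ((p ^ V p N)%:Z %| KK p l * act ((1 - 'X)^+N) (dil p (hh l)) t)%Z.
Proof.
move=> pp hW; have p0 := prime_gt0 pp; have p1 := prime_gt1 pp.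
elim/ltn_ind => N IH l t.
set M := (N %/ p)%N; set n0 := (N %% p)%N.
have hN : N = (p * M + n0)%N by rewrite mulnC /M /n0 -divn_eq.
rewrite V_div // -/M.
case: (posnP M) => hM.
  by rewrite hM /V fact0 logn1 expn0 dvd1z.
have -> : act ((1 - 'X)^+N) (dil p (hh l)) t = act ((1 - 'X)^+(p * M + n0)) (dil p (hh l)) t
  by rewrite -hN.
rewrite (decomp _ _ _ _ _ _ p0 hW) mulr_sumr; apply: rpred_sum => i _.
match goal with |- is_true (?x \in _) => suff H : ((p ^ (M + V p M))%:Z %| x)%Z by exact: H end.
have hiM : (i <= M)%N by rewrite -ltnS ltn_ord.
have hiN : (i < N)%N.
  apply: (leq_ltn_trans hiM); rewrite hN; nia.
set j := (M - i)%N.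
have -> : (1 - 'X)^+n0 * ((1 - 'X) * W)^+i = ((1 - 'X)^+n0 * W^+i) * (1 - 'X)^+i
  :> {poly int} by rewrite exprMn; ring.
rewrite act_mul.
case: (leqP j l) => hjl; last first.
  rewrite act_zero ?mulr0 ?dvdz0 // => u.
  rewrite act_zero // => v; rewrite /dil; case: ifP => // _.
  by rewrite act_1Xn_h ifF //; apply/negbTE; rewrite -ltnNge.
set Y := act ((1 - 'X)^+i) (dil p (hh (l - j))).
have hY : forall u, ((p ^ V p i)%:Z %| KK p (l - j) * Y u)%Z by move=> u; apply: IH.
rewrite (act_ext _ _ (fun u => (-1)^+j * Y u)); last first.
  move=> u; rewrite -act_linM; apply: act_ext => v; rewrite /dil; case: ifP => _.
    by rewrite act_1Xn_h hjl.
  by rewrite mulr0.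
rewrite act_linM.
have hZ : ((p ^ V p i)%:Z %| KK p (l - j) * act ((1 - 'X) ^+ n0 * W ^+ i) Y t)%Z.
  by rewrite -act_linM; apply: pdvd_act.
have hK : KK p l = ('C(l, j) * p ^ j)%:R * j`!%:R * KK p (l - j).
  rewrite /KK -!natrM; congr (_%:R).
  rewrite -(bin_fact hjl) -{3}(subnK hjl) expnD; ring.
rewrite hK.
set Z := KK p (l - j) * act ((1 - 'X) ^+ n0 * W ^+ i) Y t.
have -> : ('C(l, j) * p ^ j)%:R * j`!%:R * KK p (l - j) *
   (('C(M, i) * p ^ i)%:R * ((-1) ^+ j * act ((1 - 'X) ^+ n0 * W ^+ i) Y t))
   = ((-1)^+j * 'C(l, j)%:R) * ((p ^ j)%:R * (p ^ i)%:R * ((j`!)%:R * ('C(M, i))%:R)) * Z.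
  rewrite /Z !natrM; ring.
have hVM := V_binom p M i hiM.
apply: (pdvd_le _ _ (0 + ((j + i) + (V p j + logn p 'C(M, i))) + V p i) _).
  rewrite /j; lia.
apply: pdvd_mul => //; apply: pdvd_mul.
  by rewrite expn0 dvd1z.
apply: pdvd_mul; first by rewrite -natrM -expnD natz dvdzz.
by apply: pdvd_mul; rewrite natz pdvd_logn.
Qed.

Lemma integ p (W : {poly int}) : prime p ->
  (1 - 'X)^+p = (1 - 'X^p) + p%:R * ((1 - 'X) * W) ->
  forall b N l u, (1 <= b)%N ->
  ((p ^ V p (N %/ p ^ (b - 1))%N)%:Z %| KK p l * act ((1 - 'X)^+N) (gg p b l) u)%Z.
Proof.
move=> pp hW; have p0 := prime_gt0 pp.
elim => [|b IH] N l u // _.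
case: b IH => [|b] IH.
  rewrite subnn expn0 divn1 /gg /=; exact: (base _ _ pp hW).
set M := (N %/ p)%N; set n0 := (N %% p)%N.
have hN : N = (p * M + n0)%N by rewrite mulnC /M /n0 -divn_eq.
have -> : (N %/ p ^ (b.+2 - 1))%N = (M %/ p ^ (b.+1 - 1))%N.
  by rewrite /M -divnMA -expnS; congr (_ %/ p ^ _)%N; lia.
have -> : act ((1 - 'X)^+N) (gg p b.+2 l) u =
   act ((1 - 'X)^+(p * M + n0)) (dil p (gg p b.+1 l)) u by rewrite -hN.
have hf : forall N' u', ((p ^ V p (N' %/ p ^ (b.+1 - 1))%N)%:Z %|
     KK p l * act ((1 - 'X)^+N') (gg p b.+1 l) u')%Z by move=> N' u'; apply: IH.
have [h1 h2] := step _ _ _ _ _ pp hW hf M n0 u.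
rewrite -[X in KK p l * X](subrK (act ((1 - 'X)^+n0) (dil p (act ((1 - 'X)^+M) (gg p b.+1 l))) u)).
rewrite mulrDr rpredD //.
exact: (pdvd_le _ _ _ _ (leq_addr 1 _) h2).
Qed.

Lemma lucas_term p n0 G r : prime p -> (n0 < p)%N ->
  act ((1 - 'X)^+n0) (dil p G) r =
  (-1)^+ `|(r %% p%:Z)%Z|%N * ('C(n0, `|(r %% p%:Z)%Z|%N))%:R * G (r %/ p%:Z)%Z.
Proof.
move=> pp hn0; have p0 := prime_gt0 pp.
set r0 := `|(r %% p%:Z)%Z|%N.
have hr0 : (r %% p%:Z)%Z = r0%:Z.
  by rewrite /r0 gez0_abs // modz_ge0 // eqz_nat -lt0n.
have hr0p : (r0 < p)%N.
  have h : (0 < p%:Z)%R by rewrite ltz_nat.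
  by have := ltz_pmod r h; rewrite hr0 ltz_nat.
set s := (r %/ p%:Z)%Z.
have hr : r = s * p%:Z + r0%:Z by rewrite -hr0 /s -divz_eq.
rewrite act_1XnE.
rewrite (eq_bigr (fun k : 'I_n0.+1 => if (k == r0 :> nat) then
    (-1) ^+ r0 * ('C(n0, r0))%:R * G s else 0)); last first.
  move=> k _; case: eqP => hk.
    have -> : r - (nat_of_ord k)%:Z = s * p%:Z by rewrite hr hk; ring.
    by rewrite dil_mul // hk.
  rewrite dil_ndvd ?mulr0 //; apply/negP => hd.
  have : (p%:Z %| r0%:Z - (nat_of_ord k)%:Z)%Z.
    have -> : r0%:Z - (nat_of_ord k)%:Z = (r - (nat_of_ord k)%:Z) - s * p%:Z by rewrite hr; ring.
    by rewrite rpredB // dvdz_mull // dvdzz.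
  rewrite dvdzE absz_nat => /dvdn_leq; have := ltn_ord k; lia.
rewrite -big_mkcond (big_ord1_eq _ (fun _ => (-1) ^+ r0 * (binomial n0 r0)%:R * G s)); case: ifP => // /negbT.
by rewrite -leqNgt => h; rewrite bin_small // mulr0 mul0r.
Qed.

Lemma main_int p a l n r : prime p -> (1 <= a)%N ->
  ((p ^ (V p (n %/ p ^ a) + 1))%:Z %| KK p l *
     (act ((1 - 'X)^+n) (gg p a.+1 l) r -
      (-1)^+ `|(r %% p%:Z)%Z|%N * ('C(n %% p, `|(r %% p%:Z)%Z|%N))%:R *
        act ((1 - 'X)^+(n %/ p)) (gg p a l) (r %/ p%:Z)%Z))%Z.
Proof.
move=> pp ha; have p0 := prime_gt0 pp.
have [W hW] := E_exists p pp.
have hf : forall N' u', ((p ^ V p (N' %/ p ^ (a - 1))%N)%:Z %|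
     KK p l * act ((1 - 'X)^+N') (gg p a l) u')%Z.
  by move=> N' u'; apply: (integ _ _ pp hW).
set M := (n %/ p)%N; set n0 := (n %% p)%N.
have hN : n = (p * M + n0)%N by rewrite mulnC /M /n0 -divn_eq.
have [_ h2] := step _ _ _ _ _ pp hW hf M n0 r.
have -> : (n %/ p ^ a)%N = (M %/ p ^ (a - 1))%N.
  by rewrite /M -divnMA -expnS; congr (_ %/ p ^ _)%N; lia.
have -> : act ((1 - 'X)^+n) (gg p a.+1 l) r =
   act ((1 - 'X)^+(p * M + n0)) (dil p (gg p a l)) r by rewrite -hN.
rewrite -(lucas_term _ _ _ _ pp) //; last by rewrite /n0 ltn_pmod.
Qed.

Lemma gg_eq p b l u : (0 < p)%N ->
  gg p b l u = if ((p ^ b)%:Z %| u)%Z then binz (- (u %/ (p ^ b)%:Z)%Z) l else 0.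
Proof.
move=> p0; elim: b u => [|b IH] u.
  by rewrite expn0 dvd1z divz1.
rewrite /gg iterS -/(gg p b l).
have pz : p%:Z != 0 by rewrite eqz_nat -lt0n.
have [/dvdzP [w ->] | hn] := boolP (p%:Z %| u)%Z.
  rewrite dil_mul // IH expnSr PoszM dvdz_mul2r // divzMpr //.
rewrite dil_ndvd // ifF //; apply/negP => h; move/negP: hn; apply.
apply: dvdz_trans h; by rewrite expnSr PoszM dvdz_mull // dvdzz.
Qed.

Lemma T_eq p l b n r : prime p ->
  T p l b n r = ((KK p l)%:~R / ((n %/ p ^ (b - 1))`!)%:R) *
                (act ((1 - 'X)^+n) (gg p b l) r)%:~R.
Proof.
move=> pp; have p0 := prime_gt0 pp.
rewrite /T /KK; congr (_ * _); first by rewrite natz pmulrn -natrM.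
rewrite act_1XnE rmorph_sum big_mkcond big_mkord /=.
apply: eq_bigr => k _; rewrite gg_eq //.
have e : ((p ^ b)%:Z %| r - (nat_of_ord k)%:Z)%Z = ((p ^ b)%:Z %| (nat_of_ord k)%:Z - r)%Z.
  by rewrite -opprB rpredN.
rewrite e; case: ifP => hd; last by rewrite mulr0 rmorph0.
move: (hd) => /dvdzP [z hz].
have pb : (p ^ b)%:Z != 0 by rewrite eqz_nat -lt0n expn_gt0 p0.
have -> : - divz (r - (nat_of_ord k)%:Z) (p ^ b)%:Z = divz ((nat_of_ord k)%:Z - r) (p ^ b)%:Z.
  have -> : r - (nat_of_ord k)%:Z = (- z) * (p ^ b)%:Z by rewrite mulNr -hz opprB.
  by rewrite hz !mulzK // opprK.
have hs : ((-1)^+k : int)%:~R = (-1)^+k :> rat.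
  by rewrite -signr_odd -[in RHS]signr_odd; case: odd.
rewrite !intrM binzE hs natz pmulrn; ring.
Qed.

Lemma intr_posz (n : nat) : (Posz n)%:~R = n%:R :> rat.
Proof. by []. Qed.

Theorem theorem1p5 (p alpha l n : nat) (r : int) :
  prime p -> (2 <= alpha)%N ->
  ratcong p 1
    (T p l alpha.+1 n r)
    ((-1) ^+ `|(r %% p)%Z|%N * ('C(n %% p, `|(r %% p)%Z|%N))%:R *
       T p l alpha (n %/ p) (r %/ p)%Z).
Proof.
move=> pp ha; have p0 := prime_gt0 pp.
have h := main_int p alpha l n r pp (leq_trans (isT : (1 <= 2)%N) ha).
rewrite !T_eq //.
have -> : ((n %/ p) %/ p ^ (alpha - 1))%N = (n %/ p ^ (alpha.+1 - 1))%N.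
  by rewrite -divnMA -expnS; congr (_ %/ p ^ _)%N; lia.
rewrite subSS subn0 in h *.
set D := (n %/ p ^ alpha)%N in h *.
set A := act _ _ r in h *.
set B := act _ _ (r %/ p)%Z in h *.
set r0 := `|(r %% p)%Z|%N in h *.
set c := (-1) ^+ r0 * ('C(n %% p, r0))%:R in h *.
move: h => /dvdzP [z hz].
have [u cu hu] := pfactor_coprime pp (fact_gt0 D).
have u0 : (0 < u)%N by move: hu; case: u cu => //; rewrite mul0n => _ /eqP; rewrite eqn0Ngt fact_gt0.
have hs : ((-1)^+r0 : int)%:~R = (-1)^+r0 :> rat.
  by rewrite -signr_odd -[in RHS]signr_odd; case: odd.
have hc : ((-1)^+r0 * ('C(n %% p, r0))%:R : rat) = c%:~R.
  by rewrite /c intrM hs natz pmulrn.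
rewrite hc /ratcong expn1; clearbody c.
have hD : (D`!)%:R != 0 :> rat by rewrite pnatr_eq0 -lt0n fact_gt0.
have hy : (KK p l)%:~R / (D`!)%:R * A%:~R - c%:~R * ((KK p l)%:~R / (D`!)%:R * B%:~R)
    = (z * p%:Z)%:~R / u%:R :> rat.
  transitivity ((KK p l * (A - c * B))%:~R / (D`!)%:R : rat).
    by rewrite intrM intrB intrM; field.
  rewrite hz hu natrM intrM intr_posz addn1 expnSr natrM /V.
  have hu0 : u%:R != 0 :> rat by rewrite pnatr_eq0 -lt0n.
  have hpV : (p ^ logn p D`!)%:R != 0 :> rat by rewrite pnatr_eq0 -lt0n expn_gt0 p0.
  field; rewrite hpV hu0 //.
rewrite hy.
set y := (z * p%:Z)%:~R / u%:R.
have e1 : (numq y * u%:Z)%:~R = (z * p%:Z * denq y)%:~R :> rat.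
  rewrite intrM numqE /y [in RHS]intrM pmulrn.
  have hu0 : u%:R != 0 :> rat by rewrite pnatr_eq0 -lt0n.
  field; exact: hu0.
have e2 := intr_inj e1.
have : (p%:Z %| numq y * u%:Z)%Z by rewrite e2 -mulrA mulrCA dvdz_mulr // dvdzz.
by rewrite Gauss_dvdzl // coprimezE !absz_nat.
Qed.
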